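(* Every finitary filter class contained in $\mathsf{BA}_\infty$ is a logical class, i.e. it is also closed under strict homomorphic images.
   Context: Structures are pairs $\langle\mathbf{A},F\rangle$ with $\mathbf{A}$ a Boolean algebra and $F\subseteq\mathbf{A}$. A homomorphism $h\colon\langle\mathbf{A},F\rangle\to\langle\mathbf{B},G\rangle$ of Boolean algebras is strict if $F=h^{-1}[G]$; $\langle\mathbf{B},G\rangle$ is a strict homomorphic image of $\langle\mathbf{A},F\rangle$ (and the latter a strict homomorphic preimage of the former) if there is a surjective strict homomorphism between them. A filter class is a class closed under isomorphism, substructures $\langle\mathbf{B},F\cap\mathbf{B}\rangle$, products $\langle\prod\mathbf{A}_i,\prod F_i\rangle$ and strict homomorphic preimages; it is finitary if it is also closed under ultraproducts; a logical class is a filter class closed under strict homomorphic images. $\mathsf{BA}_\infty$ is the class of all $\langle\mathbf{A},F\rangle$ with $F$ a non-empty upset of $\mathbf{A}$. *)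

(* Defs.v *)
From Stdlib Require Import FunctionalExtensionality.

Record BA := mkBA {
  car : Type;
  bjoin : car -> car -> car;
  bmeet : car -> car -> car;
  bcompl : car -> car;
  bbot : car;
  btop : car;
  joinC : forall x y, bjoin x y = bjoin y x;
  meetC : forall x y, bmeet x y = bmeet y x;
  joinA : forall x y z, bjoin x (bjoin y z) = bjoin (bjoin x y) z;
  meetA : forall x y z, bmeet x (bmeet y z) = bmeet (bmeet x y) z;
  joinKmeet : forall x y, bjoin x (bmeet x y) = x;
  meetKjoin : forall x y, bmeet x (bjoin x y) = x;
  meetDjoin : forall x y z, bmeet x (bjoin y z) = bjoin (bmeet x y) (bmeet x z);
  join0 : forall x, bjoin x bbot = x;
  meet1 : forall x, bmeet x btop = x;
  joinCompl : forall x, bjoin x (bcompl x) = btop;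
  meetCompl : forall x, bmeet x (bcompl x) = bbot
}.

Definition ble (A : BA) (x y : car A) : Prop := bmeet A x y = x.

Definition is_hom (A B : BA) (h : car A -> car B) : Prop :=
  (forall x y, h (bjoin A x y) = bjoin B (h x) (h y)) /\
  (forall x y, h (bmeet A x y) = bmeet B (h x) (h y)) /\
  (forall x, h (bcompl A x) = bcompl B (h x)) /\
  h (bbot A) = bbot B /\ h (btop A) = btop B.

Definition strict (A B : BA) (F : car A -> Prop) (G : car B -> Prop)
  (h : car A -> car B) : Prop := forall x, F x <-> G (h x).

Definition surj {X Y : Type} (h : X -> Y) : Prop := forall y, exists x, h x = y.
Definition inj {X Y : Type} (h : X -> Y) : Prop := forall x y, h x = h y -> x = y.

Section Prod.
Variables (I : Type) (A : I -> BA).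
Let P := forall i, car (A i).
Definition pjoin (x y : P) : P := fun i => bjoin (A i) (x i) (y i).
Definition pmeet (x y : P) : P := fun i => bmeet (A i) (x i) (y i).
Definition pcompl (x : P) : P := fun i => bcompl (A i) (x i).
Definition pbot : P := fun i => bbot (A i).
Definition ptop : P := fun i => btop (A i).

Ltac pw := intros; apply functional_extensionality_dep; intro i;
  unfold pjoin, pmeet, pcompl, pbot, ptop.

Definition prodBA : BA.
Proof.
refine (@mkBA P pjoin pmeet pcompl pbot ptop _ _ _ _ _ _ _ _ _ _ _).
- pw; apply joinC.
- pw; apply meetC.
- pw; apply joinA.
- pw; apply meetA.
- pw; apply joinKmeet.
- pw; apply meetKjoin.
- pw; apply meetDjoin.
- pw; apply join0.
- pw; apply meet1.
- pw; apply joinCompl.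
- pw; apply meetCompl.
Defined.
End Prod.

Definition prodF (I : Type) (A : I -> BA) (F : forall i, car (A i) -> Prop)
  : car (@prodBA I A) -> Prop := fun x => forall i, F i (x i).

Definition ultrafilter (I : Type) (U : (I -> Prop) -> Prop) : Prop :=
  U (fun _ => True) /\
  ~ U (fun _ => False) /\
  (forall X Y : I -> Prop, U X -> (forall i, X i -> Y i) -> U Y) /\
  (forall X Y : I -> Prop, U X -> U Y -> U (fun i => X i /\ Y i)) /\
  (forall X : I -> Prop, U X \/ U (fun i => ~ X i)).

Definition StrClass := forall A : BA, (car A -> Prop) -> Prop.

Definition closed_iso (K : StrClass) : Prop :=
  forall (A B : BA) (F : car A -> Prop) (G : car B -> Prop) (h : car A -> car B),
    is_hom A B h -> inj h -> surj h -> strict A B F G h -> K A F -> K B G.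

(* substructures, up to isomorphism: <B, F ∩ B> for a subalgebra embedded in A *)
Definition closed_sub (K : StrClass) : Prop :=
  forall (A B : BA) (F : car A -> Prop) (e : car B -> car A),
    is_hom B A e -> inj e -> K A F -> K B (fun x => F (e x)).

Definition closed_prod (K : StrClass) : Prop :=
  forall (I : Type) (A : I -> BA) (F : forall i, car (A i) -> Prop),
    (forall i, K (A i) (F i)) -> K (@prodBA I A) (@prodF I A F).

Definition closed_shpre (K : StrClass) : Prop :=
  forall (A B : BA) (F : car A -> Prop) (G : car B -> Prop) (h : car A -> car B),
    is_hom A B h -> surj h -> strict A B F G h -> K B G -> K A F.

Definition closed_shimg (K : StrClass) : Prop :=
  forall (A B : BA) (F : car A -> Prop) (G : car B -> Prop) (h : car A -> car B),
    is_hom A B h -> surj h -> strict A B F G h -> K A F -> K B G.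

(* <B,G> is (isomorphic to) the ultraproduct of <A_i,F_i> modulo U, witnessed by
   the (surjective homomorphic) quotient map h from the product. *)
Definition is_ultraproduct (I : Type) (A : I -> BA) (F : forall i, car (A i) -> Prop)
  (U : (I -> Prop) -> Prop) (B : BA) (G : car B -> Prop)
  (h : car (@prodBA I A) -> car B) : Prop :=
  is_hom (@prodBA I A) B h /\ surj h /\
  (forall x y : car (@prodBA I A), h x = h y <-> U (fun i => x i = y i)) /\
  (forall x : car (@prodBA I A), G (h x) <-> U (fun i => F i (x i))).

Definition closed_ultraprod (K : StrClass) : Prop :=
  forall (I : Type) (A : I -> BA) (F : forall i, car (A i) -> Prop)
    (U : (I -> Prop) -> Prop) (B : BA) (G : car B -> Prop)
    (h : car (@prodBA I A) -> car B),
    @ultrafilter I U -> (forall i, K (A i) (F i)) ->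
    @is_ultraproduct I A F U B G h -> K B G.

Definition filter_class (K : StrClass) : Prop :=
  closed_iso K /\ closed_sub K /\ closed_prod K /\ closed_shpre K.

Definition finitary_filter_class (K : StrClass) : Prop :=
  filter_class K /\ closed_ultraprod K.

Definition logical_class (K : StrClass) : Prop :=
  filter_class K /\ closed_shimg K.

Definition BA_inf : StrClass := fun A F =>
  (exists a, F a) /\ (forall x y, ble A x y -> F x -> F y).

(* Main.v *)
Require Import Defs.
From Stdlib Require Import FunctionalExtensionality PropExtensionality ProofIrrelevance Classical ClassicalEpsilon.

Section BALemmas.
Variable A : BA.

Lemma meet_idem x : bmeet A x x = x.
Proof. rewrite <- (joinKmeet A x x) at 2. apply meetKjoin. Qed.
Lemma join_idem x : bjoin A x x = x.
Proof. rewrite <- (meetKjoin A x x) at 2. apply joinKmeet. Qed.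
Lemma meet0 x : bmeet A x (bbot A) = bbot A.
Proof. rewrite <- (meetCompl A x). rewrite meetA, meet_idem. reflexivity. Qed.
Lemma join1 x : bjoin A x (btop A) = btop A.
Proof. rewrite <- (joinCompl A x). rewrite joinA, join_idem. reflexivity. Qed.
Lemma meet0l x : bmeet A (bbot A) x = bbot A.
Proof. rewrite meetC. apply meet0. Qed.
Lemma join1l x : bjoin A (btop A) x = btop A.
Proof. rewrite joinC. apply join1. Qed.
Lemma meet1l x : bmeet A (btop A) x = x.
Proof. rewrite meetC. apply meet1. Qed.
Lemma join0l x : bjoin A (bbot A) x = x.
Proof. rewrite joinC. apply join0. Qed.
Lemma meet_absorb2 x y : bmeet A (bjoin A x y) x = x.
Proof. rewrite meetC. apply meetKjoin. Qed.
Lemma meetDjoin_r x y z : bmeet A (bjoin A y z) x = bjoin A (bmeet A y x) (bmeet A z x).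
Proof. rewrite meetC, meetDjoin, (meetC A x y), (meetC A x z). reflexivity. Qed.
Lemma joinDmeet x y z : bjoin A x (bmeet A y z) = bmeet A (bjoin A x y) (bjoin A x z).
Proof.
  symmetry. rewrite (meetDjoin A (bjoin A x y) x z).
  rewrite meet_absorb2. rewrite (meetC A (bjoin A x y) z), meetDjoin.
  rewrite joinA, (meetC A z x), joinKmeet, (meetC A z y). reflexivity.
Qed.
Lemma compl_unique x y : bmeet A x y = bbot A -> bjoin A x y = btop A -> y = bcompl A x.
Proof.
  intros H1 H2. transitivity (bmeet A y (bcompl A x)).
  - rewrite <- (meet1 A y) at 1. rewrite <- (joinCompl A x). rewrite meetDjoin.
    rewrite (meetC A y x), H1, join0l. reflexivity.
  - rewrite (meetC A y). rewrite <- (meet1 A (bcompl A x)) at 2. rewrite <- H2.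
    rewrite meetDjoin. rewrite (meetC A (bcompl A x) x), meetCompl, join0l. reflexivity.
Qed.
Lemma compl_compl x : bcompl A (bcompl A x) = x.
Proof. symmetry. apply compl_unique.
  - rewrite meetC. apply meetCompl.
  - rewrite joinC. apply joinCompl. Qed.
Lemma compl_top : bcompl A (btop A) = bbot A.
Proof. symmetry. apply compl_unique. apply meet0. apply join0. Qed.
Lemma compl_bot : bcompl A (bbot A) = btop A.
Proof. symmetry. apply compl_unique. apply meet0l. apply join1. Qed.
Lemma meet4 a b c d : bmeet A (bmeet A a b) (bmeet A c d) = bmeet A (bmeet A a c) (bmeet A b d).
Proof. rewrite <- !meetA. f_equal. rewrite !meetA. rewrite (meetC A b c). reflexivity. Qed.
Lemma join4 a b c d : bjoin A (bjoin A a b) (bjoin A c d) = bjoin A (bjoin A a c) (bjoin A b d).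
Proof. rewrite <- !joinA. f_equal. rewrite !joinA. rewrite (joinC A b c). reflexivity. Qed.
Lemma compl_join x y : bcompl A (bjoin A x y) = bmeet A (bcompl A x) (bcompl A y).
Proof.
  symmetry. apply compl_unique.
  - rewrite meetDjoin_r. rewrite meetA, meetCompl, meet0l.
    rewrite (meetC A (bcompl A x)), meetA, meetCompl, meet0l. apply join0.
  - rewrite joinDmeet. rewrite (joinC A x y) at 1. rewrite <- joinA, joinCompl, join1.
    rewrite <- joinA, joinCompl, join1. apply meet1.
Qed.
Lemma compl_meet x y : bcompl A (bmeet A x y) = bjoin A (bcompl A x) (bcompl A y).
Proof.
  rewrite <- (compl_compl x) at 1. rewrite <- (compl_compl y) at 1.
  rewrite <- compl_join. apply compl_compl.
Qed.

Lemma ble_refl x : ble A x x.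
Proof. apply meet_idem. Qed.
Lemma ble_trans x y z : ble A x y -> ble A y z -> ble A x z.
Proof. unfold ble. intros H1 H2. rewrite <- H1 at 1. rewrite <- meetA, H2, H1. reflexivity. Qed.
Lemma ble_meet_l x y : ble A (bmeet A x y) x.
Proof. unfold ble. rewrite (meetC A (bmeet A x y) x), meetA, meet_idem. reflexivity. Qed.
Lemma ble_meet_r x y : ble A (bmeet A x y) y.
Proof. unfold ble. rewrite <- meetA, meet_idem. reflexivity. Qed.
Lemma ble_join_l x y : ble A x (bjoin A x y).
Proof. apply meetKjoin. Qed.
Lemma ble_meet_mono a b a' b' : ble A a b -> ble A a' b' -> ble A (bmeet A a a') (bmeet A b b').
Proof. unfold ble. intros H H'. rewrite meet4, H, H'. reflexivity. Qed.
Lemma ble_top x : ble A x (btop A).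
Proof. apply meet1. Qed.
Lemma ble_bot_eq x : ble A x (bbot A) -> x = bbot A.
Proof. unfold ble. rewrite meet0. intros; symmetry; auto. Qed.
Lemma ble_glb c a b : ble A c a -> ble A c b -> ble A c (bmeet A a b).
Proof. unfold ble. intros H1 H2. rewrite meetA, H1, H2. reflexivity. Qed.
End BALemmas.

Definition incl {T} (X Y : T -> Prop) := forall t, X t -> Y t.
Definition Union {T} (C : (T -> Prop) -> Prop) : T -> Prop := fun t => exists X, C X /\ X t.

Lemma set_ext {T} (X Y : T -> Prop) : incl X Y -> incl Y X -> X = Y.
Proof. intros H1 H2. apply functional_extensionality; intro t.
  apply propositional_extensionality; split; auto. Qed.

Section Tower.
Variable T : Type.
Variable succ : (T -> Prop) -> (T -> Prop).
Hypothesis infl : forall M, incl M (succ M).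
Variable M0 : T -> Prop.
Inductive tower : (T -> Prop) -> Prop :=
| tw0 : tower M0
| twS : forall M, tower M -> tower (succ M)
| twU : forall C, (exists X, C X) -> (forall X, C X -> tower X) -> tower (Union C).

Lemma tower_M0 X : tower X -> incl M0 X.
Proof.
  induction 1 as [|M _ IH|C [X0 HX0] _ IH].
  - intros t h; exact h.
  - intros t h; apply infl, IH, h.
  - intros t h. exists X0. split; auto. apply IH; auto.
Qed.

Definition ext (c : T -> Prop) := forall x, tower x -> incl x c -> ~ incl c x -> incl (succ x) c.

Lemma towA c : ext c -> tower c -> forall x, tower x -> incl x c \/ incl (succ c) x.
Proof.
  intros Hc Tc x Tx. induction Tx as [|M TM IH|C HC TC IH].
  - left. apply tower_M0; auto.
  - destruct IH as [H|H].
    + destruct (classic (incl c M)) as [H'|H'].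
      * right. rewrite (set_ext _ _ H H'). intros t h; exact h.
      * left. apply Hc; auto.
    + right. intros t h. apply infl, H, h.
  - destruct (classic (exists X, C X /\ ~ incl X c)) as [[X [HX HnX]]|Hn].
    + right. destruct (IH X HX) as [H|H]; [contradiction|].
      intros t h. exists X. split; auto.
    + left. intros t [X [HX Xt]].
      destruct (classic (incl X c)) as [H|H]; [apply H; auto|].
      exfalso; apply Hn; exists X; auto.
Qed.

Lemma towB c : tower c -> ext c.
Proof.
  induction 1 as [|c Tc IH|C HC TC IH].
  - intros x Tx H1 H2. exfalso. apply H2, tower_M0, Tx.
  - intros x Tx H1 H2. destruct (towA c IH Tc x Tx) as [H|H]; [|contradiction].
    destruct (classic (incl c x)) as [H'|H'].
    + rewrite (set_ext _ _ H H'). intros t h; exact h.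
    + intros t h. apply infl. apply (IH x Tx H H'), h.
  - intros x Tx H1 H2.
    destruct (not_all_ex_not _ _ H2) as [t Ht].
    apply imply_to_and in Ht. destruct Ht as [[X [HX Xt]] Hxt].
    destruct (towA X (IH X HX) (TC X HX) x Tx) as [H|H].
    + assert (Hn : ~ incl X x) by (intro Hi; apply Hxt, Hi, Xt).
      intros s hs. exists X. split; auto. apply (IH X HX x Tx H Hn s hs).
    + exfalso. apply Hxt, H, infl, Xt.
Qed.

Lemma tower_chain x y : tower x -> tower y -> incl x y \/ incl y x.
Proof.
  intros Tx Ty. destruct (towA y (towB y Ty) Ty x Tx) as [H|H]; auto.
  right. intros t h. apply H, infl, h.
Qed.
End Tower.

Theorem zorn {T} (P : (T -> Prop) -> Prop) (M0 : T -> Prop) :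
  P M0 ->
  (forall C, (exists X, C X) -> (forall X, C X -> P X) ->
     (forall X Y, C X -> C Y -> incl X Y \/ incl Y X) -> P (Union C)) ->
  exists M, P M /\ incl M0 M /\ forall N, P N -> incl M N -> incl N M.
Proof.
  intros PM0 Hch. apply NNPP. intro Hno.
  assert (Hs : forall M, exists N, incl M N /\ (P M -> incl M0 M -> P N /\ ~ incl N M)).
  { intro M. destruct (classic (P M /\ incl M0 M)) as [[H1 H2]|H].
    - apply not_ex_all_not with (n := M) in Hno.
      apply not_and_or in Hno. destruct Hno as [Hno|Hno]; [contradiction|].
      apply not_and_or in Hno. destruct Hno as [Hno|Hno]; [contradiction|].
      apply not_all_ex_not in Hno. destruct Hno as [N HN].
      apply imply_to_and in HN. destruct HN as [PN HN].
      apply imply_to_and in HN. destruct HN as [MN HN].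
      exists N. split; auto.
    - exists M. split; [intros t h; exact h|]. intros; exfalso; auto. }
  set (succ := fun M => proj1_sig (constructive_indefinite_description _ (Hs M))).
  assert (Hsp : forall M, incl M (succ M) /\ (P M -> incl M0 M -> P (succ M) /\ ~ incl (succ M) M)).
  { intro M. unfold succ. destruct (constructive_indefinite_description _ (Hs M)); auto. }
  assert (infl : forall M, incl M (succ M)) by (intro M; apply Hsp).
  assert (HT : forall X, tower T succ M0 X -> P X /\ incl M0 X).
  { induction 1 as [|M TM IH|C HC TC IH].
    - split; auto. intros t h; exact h.
    - destruct IH as [H1 H2]. split.
      + apply (proj2 (Hsp M) H1 H2).
      + intros t h. apply infl, H2, h.
    - split.
      + apply Hch; auto.
        * intros X HX; apply IH; auto.
        * intros X Y HX HY. apply (tower_chain T succ infl M0); auto.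
      + destruct HC as [X0 HX0]. intros t h. exists X0. split; auto. apply (IH X0 HX0), h. }
  set (Uall := Union (tower T succ M0)).
  assert (TU : tower T succ M0 Uall).
  { apply twU. exists M0; apply tw0. auto. }
  destruct (HT _ TU) as [PU MU].
  destruct (proj2 (Hsp Uall) PU MU) as [_ Hn]. apply Hn.
  intros t h. exists (succ Uall). split; auto. apply twS; auto.
Qed.

Definition Filt (A : BA) (M : car A -> Prop) : Prop :=
  M (btop A) /\ (forall x y, ble A x y -> M x -> M y) /\
  (forall x y, M x -> M y -> M (bmeet A x y)) /\ ~ M (bbot A).

Lemma gen_filt (A : BA) (M : car A -> Prop) x :
  Filt A M -> ~ (exists m, M m /\ bmeet A m x = bbot A) ->
  Filt A (fun y => exists m, M m /\ ble A (bmeet A m x) y).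
Proof.
  intros [Mt [Mu [Mm Mb]]] Hn. repeat split.
  - exists (btop A). split; auto. apply ble_top.
  - intros y z Hyz [m [Hm Hle]]. exists m. split; auto. eapply ble_trans; eauto.
  - intros y z [m [Hm H1]] [m' [Hm' H2]]. exists (bmeet A m m'). split; auto.
    assert (E : bmeet A (bmeet A m m') x = bmeet A (bmeet A m x) (bmeet A m' x)).
    { rewrite meet4, meet_idem. reflexivity. }
    rewrite E. apply ble_meet_mono; auto.
  - intros [m [Hm Hle]]. apply Hn. exists m. split; auto. apply ble_bot_eq; auto.
Qed.

Theorem uf_exists (A : BA) (F0 : car A -> Prop) : Filt A F0 ->
  exists M, incl F0 M /\ Filt A M /\ forall x, M x \/ M (bcompl A x).
Proof.
  intro HF0. destruct (zorn (Filt A) F0 HF0) as [M [FM [F0M Mmax]]].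
  { intros C [X0 HX0] HC Hch. repeat split.
    - exists X0. split; auto. apply HC; auto.
    - intros x y Hxy [X [HX Xx]]. exists X. split; auto. destruct (HC X HX) as [_ [Hu _]]. eauto.
    - intros x y [X [HX Xx]] [Y [HY Yy]]. destruct (Hch X Y HX HY) as [H|H].
      + exists Y. split; auto. destruct (HC Y HY) as [_ [_ [Hm _]]]. apply Hm; auto.
      + exists X. split; auto. destruct (HC X HX) as [_ [_ [Hm _]]]. apply Hm; auto.
    - intros [X [HX Xb]]. destruct (HC X HX) as [_ [_ [_ Hb]]]. auto. }
  exists M. split; auto. split; auto. intro x.
  destruct FM as [Mt [Mu [Mm Mb]]] eqn:EFM.
  assert (Hgen : forall z, ~ M z -> exists m, M m /\ bmeet A m z = bbot A).
  { intros z Hz. apply NNPP. intro Hn. apply Hz.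
    pose proof (gen_filt A M z FM Hn) as HG.
    apply (Mmax _ HG).
    - intros t ht. exists t. split; auto. apply ble_meet_l.
    - exists (btop A). split; auto. rewrite meet1l. apply ble_refl. }
  apply NNPP. intro H. apply not_or_and in H. destruct H as [H1 H2].
  destruct (Hgen x H1) as [m [Hm E1]]. destruct (Hgen _ H2) as [m' [Hm' E2]].
  apply Mb. assert (Hk : bmeet A m m' = bbot A).
  { rewrite <- (meet1 A (bmeet A m m')). rewrite <- (joinCompl A x). rewrite meetDjoin.
    rewrite (meetC A m m') at 1. rewrite <- (meetA A m' m x), E1, meet0.
    rewrite <- (meetA A m m' (bcompl A x)), E2, meet0. apply join0. }
  rewrite <- Hk. apply Mm; auto.
Qed.

Definition PowBA (I : Type) : BA.
Proof.
  refine (@mkBA (I -> Prop) (fun X Y i => X i \/ Y i) (fun X Y i => X i /\ Y i)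
           (fun X i => ~ X i) (fun _ => False) (fun _ => True) _ _ _ _ _ _ _ _ _ _ _);
  intros; apply functional_extensionality; intro i; apply propositional_extensionality;
  try tauto.
Defined.

Section Quot.
Variable P : BA.
Variable R : car P -> car P -> Prop.
Hypothesis Rrefl : forall x, R x x.
Hypothesis Rsym : forall x y, R x y -> R y x.
Hypothesis Rtrans : forall x y z, R x y -> R y z -> R x z.
Hypothesis Rjoin : forall x y x' y', R x x' -> R y y' -> R (bjoin P x y) (bjoin P x' y').
Hypothesis Rmeet : forall x y x' y', R x x' -> R y y' -> R (bmeet P x y) (bmeet P x' y').
Hypothesis Rcompl : forall x x', R x x' -> R (bcompl P x) (bcompl P x').

Definition Qcar := { S : car P -> Prop | exists x, S = R x }.
Definition qq (x : car P) : Qcar := exist _ (R x) (ex_intro _ x eq_refl).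

Lemma sig_eq (a b : Qcar) : proj1_sig a = proj1_sig b -> a = b.
Proof. destruct a, b; simpl; intro; subst; f_equal; apply proof_irrelevance. Qed.

Lemma qq_eq x y : qq x = qq y <-> R x y.
Proof.
  split.
  - intro H. apply (f_equal (@proj1_sig _ _)) in H. simpl in H.
    assert (Hy : R y y) by auto. rewrite <- H in Hy. auto.
  - intro H. unfold qq. assert (E : R x = R y).
    { apply functional_extensionality; intro z; apply propositional_extensionality.
      split; eauto. }
    apply sig_eq. simpl. exact E.
Qed.

Definition rep (S : Qcar) : car P := proj1_sig (constructive_indefinite_description _ (proj2_sig S)).
Lemma rep_spec S : qq (rep S) = S.
Proof.
  unfold rep. destruct (constructive_indefinite_description _ (proj2_sig S)) as [x Hx]. simpl.
  destruct S as [S HS]. unfold qq. simpl in *. subst S. f_equal. apply proof_irrelevance.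
Qed.

Definition qjoin S T := qq (bjoin P (rep S) (rep T)).
Definition qmeet S T := qq (bmeet P (rep S) (rep T)).
Definition qcompl S := qq (bcompl P (rep S)).

Lemma rep_R x : R (rep (qq x)) x.
Proof. apply qq_eq. apply rep_spec. Qed.

Lemma qjoin_q x y : qjoin (qq x) (qq y) = qq (bjoin P x y).
Proof. apply qq_eq. apply Rjoin; apply rep_R. Qed.
Lemma qmeet_q x y : qmeet (qq x) (qq y) = qq (bmeet P x y).
Proof. apply qq_eq. apply Rmeet; apply rep_R. Qed.
Lemma qcompl_q x : qcompl (qq x) = qq (bcompl P x).
Proof. apply qq_eq. apply Rcompl; apply rep_R. Qed.

Ltac qdes := repeat match goal with
  | S : Qcar |- _ => rewrite <- (rep_spec S); generalize (rep S); clear S; intro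
  end; rewrite ?qjoin_q, ?qmeet_q, ?qcompl_q, ?qjoin_q, ?qmeet_q, ?qcompl_q, ?qjoin_q, ?qmeet_q.

Definition QBA : BA.
Proof.
  refine (@mkBA Qcar qjoin qmeet qcompl (qq (bbot P)) (qq (btop P)) _ _ _ _ _ _ _ _ _ _ _);
  intros; qdes; f_equal.
  all: first [apply joinC | apply meetC | apply joinA | apply meetA | apply joinKmeet
    | apply meetKjoin | apply meetDjoin | apply join0 | apply meet1 | apply joinCompl | apply meetCompl].
Defined.

Lemma qq_hom : is_hom P QBA qq.
Proof. repeat split; intros; simpl; symmetry;
  first [apply qjoin_q | apply qmeet_q | apply qcompl_q]. Qed.
Lemma qq_surj : @surj (car P) (car QBA) qq.
Proof. intro S. exists (rep S). apply rep_spec. Qed.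
End Quot.

Section Mix.
Variable A : BA.
Variable c : car A.
Let nc := bcompl A c.

Lemma mixmeet p q r s :
  bmeet A (bjoin A (bmeet A p c) (bmeet A q nc)) (bjoin A (bmeet A r c) (bmeet A s nc)) =
  bjoin A (bmeet A (bmeet A p r) c) (bmeet A (bmeet A q s) nc).
Proof.
  rewrite meetDjoin, !meetDjoin_r.
  rewrite (meet4 A p c r c), (meet4 A q nc r c), (meet4 A p c s nc), (meet4 A q nc s nc).
  rewrite !meet_idem. unfold nc. rewrite (meetC A (bcompl A c) c), meetCompl, !meet0.
  rewrite join0, join0l. reflexivity.
Qed.

Lemma mix_hom (a b : car A -> car A) : is_hom A A a -> is_hom A A b ->
  is_hom A A (fun x => bjoin A (bmeet A (a x) c) (bmeet A (b x) nc)).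
Proof.
  intros [aj [am [ac [a0 a1]]]] [bj [bm [bc [b0 b1]]]]. repeat split.
  - intros x y. rewrite aj, bj, !meetDjoin_r. apply join4.
  - intros x y. rewrite am, bm. symmetry. apply mixmeet.
  - intros x. rewrite ac, bc. apply compl_unique.
    + rewrite mixmeet, !meetCompl, !meet0l. apply join0.
    + rewrite join4. rewrite <- !meetDjoin_r, !joinCompl, !meet1l. apply joinCompl.
  - rewrite a0, b0, !meet0l. apply join0.
  - rewrite a1, b1, !meet1l. apply joinCompl.
Qed.
End Mix.

Section Main.
Variables (A B : BA) (F : car A -> Prop) (G : car B -> Prop) (h : car A -> car B).
Hypothesis hh : is_hom A B h.
Hypothesis hs : surj h.
Hypothesis hst : strict A B F G h.
Hypothesis ntriv : btop B <> bbot B.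

Let hj : forall x y, h (bjoin A x y) = bjoin B (h x) (h y) := proj1 hh.
Let hm : forall x y, h (bmeet A x y) = bmeet B (h x) (h y) := proj1 (proj2 hh).
Let hc : forall x, h (bcompl A x) = bcompl B (h x) := proj1 (proj2 (proj2 hh)).
Let h0 : h (bbot A) = bbot B := proj1 (proj2 (proj2 (proj2 hh))).
Let h1 : h (btop A) = btop B := proj2 (proj2 (proj2 (proj2 hh))).

Definition Hf (c : car A) : Prop := h c = btop B.

Lemma Hf_filt : Filt A Hf.
Proof.
  unfold Hf. repeat split.
  - exact h1.
  - intros x y Hxy Hx. unfold ble in Hxy.
    assert (E : h x = bmeet B (h x) (h y)) by (rewrite <- hm, Hxy; reflexivity).
    rewrite Hx, meet1l in E. symmetry; exact E.
  - intros x y Hx Hy. rewrite hm, Hx, Hy. apply meet1.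
  - intro H. apply ntriv. rewrite <- H. exact h0.
Qed.

Definition F0 : (car A -> Prop) -> Prop := fun X =>
  exists d, Hf d /\ forall c, Hf c -> ble A c d -> X c.

Lemma F0_filt : Filt (PowBA (car A)) F0.
Proof.
  repeat split.
  - exists (btop A). split. exact h1. intros; simpl; exact I.
  - intros X Y Hle [d [Hd HX]]. exists d. split; auto. intros c Hc Hcd.
    apply (f_equal (fun f => f c)) in Hle. simpl in Hle.
    pose proof (HX c Hc Hcd) as Xc. rewrite <- Hle in Xc. destruct Xc; auto.
  - intros X Y [d [Hd HX]] [d' [Hd' HY]]. exists (bmeet A d d'). split.
    + unfold Hf in *. rewrite hm, Hd, Hd'. apply meet1.
    + intros c Hc Hcd. simpl. split.
      * apply HX; auto. eapply ble_trans; [exact Hcd| apply ble_meet_l].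
      * apply HY; auto. eapply ble_trans; [exact Hcd| apply ble_meet_r].
  - intros [d [Hd HX]]. exact (HX d Hd (ble_refl A d)).
Qed.

Lemma exU : exists U : (car A -> Prop) -> Prop, ultrafilter (car A) U /\ incl F0 U.
Proof.
  destruct (uf_exists (PowBA (car A)) F0 F0_filt) as [U [HF0U [[Ut [Uu [Um Ub]]] Upr]]].
  exists U. split; auto. repeat split.
  - apply HF0U. exists (btop A). split. exact h1. intros; exact I.
  - exact Ub.
  - intros X Y HX HXY. apply (Uu X); auto.
    apply functional_extensionality; intro i; apply propositional_extensionality; simpl.
    split; [tauto|]. intro; split; auto.
  - intros X Y HX HY. exact (Um X Y HX HY).
  - exact Upr.
Qed.

Lemma exphi : exists phi : car A -> Prop, incl Hf phi /\ Filt A phi /\ forall x, phi x \/ phi (bcompl A x).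
Proof. apply uf_exists. apply Hf_filt. Qed.

Section WithUphi.
Variable U : (car A -> Prop) -> Prop.
Hypothesis Uult : ultrafilter (car A) U.
Hypothesis F0U : incl F0 U.
Variable phi : car A -> Prop.
Hypothesis Hphi : incl Hf phi.
Hypothesis phiF : Filt A phi.
Hypothesis phiP : forall x, phi x \/ phi (bcompl A x).

Lemma Uup (X Y : car A -> Prop) : U X -> (forall i, X i -> Y i) -> U Y.
Proof. destruct Uult as [_ [_ [H _]]]. apply H. Qed.
Lemma Umeet (X Y : car A -> Prop) : U X -> U Y -> U (fun i => X i /\ Y i).
Proof. destruct Uult as [_ [_ [_ [H _]]]]. apply H. Qed.
Lemma Utrue (X : car A -> Prop) : (forall i, X i) -> U X.
Proof. intro H. destruct Uult as [Ht _]. apply (Uup _ _ Ht). auto. Qed.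
Lemma Une (X : car A -> Prop) : U X -> exists i, X i.
Proof. intro HX. apply NNPP. intro Hn. destruct Uult as [_ [Hb _]]. apply Hb.
  apply (Uup _ _ HX). intros i Xi. apply Hn. exists i; auto. Qed.
Lemma UHf : U Hf.
Proof. apply F0U. exists (btop A). split. exact h1. auto. Qed.

Lemma phi_up x y : ble A x y -> phi x -> phi y.
Proof. destruct phiF as [_ [H _]]. apply H. Qed.
Lemma phi_meet x y : phi x -> phi y -> phi (bmeet A x y).
Proof. destruct phiF as [_ [_ [H _]]]. apply H. Qed.
Lemma phi_bot : ~ phi (bbot A).
Proof. destruct phiF as [_ [_ [_ H]]]. apply H. Qed.
Lemma phi_top : phi (btop A).
Proof. destruct phiF as [H _]. apply H. Qed.

Lemma phi_join x y : phi (bjoin A x y) <-> phi x \/ phi y.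
Proof.
  split.
  - intro H. apply NNPP. intro Hn. apply not_or_and in Hn. destruct Hn as [Hx Hy].
    destruct (phiP x) as [?|Hx']; [contradiction|]. destruct (phiP y) as [?|Hy']; [contradiction|].
    apply phi_bot. rewrite <- (meetCompl A (bjoin A x y)). rewrite compl_join.
    apply phi_meet; auto. apply phi_meet; auto.
  - intros [H|H].
    + apply (phi_up x); auto. apply ble_join_l.
    + apply (phi_up y); auto. rewrite joinC. apply ble_join_l.
Qed.
Lemma phi_meet_iff x y : phi (bmeet A x y) <-> phi x /\ phi y.
Proof.
  split.
  - intro H. split; [apply (phi_up _ _ (ble_meet_l A x y))| apply (phi_up _ _ (ble_meet_r A x y))]; auto.
  - intros [Hx Hy]. apply phi_meet; auto.
Qed.
Lemma phi_compl x : phi (bcompl A x) <-> ~ phi x.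
Proof.
  split.
  - intros H Hx. apply phi_bot. rewrite <- (meetCompl A x). apply phi_meet; auto.
  - intro H. destruct (phiP x); auto. contradiction.
Qed.

Definition t (x : car A) : car A :=
  if excluded_middle_informative (phi x) then btop A else bbot A.

Lemma t_hom : is_hom A A t.
Proof.
  unfold t. repeat split.
  - intros x y. destruct (excluded_middle_informative (phi (bjoin A x y))) as [H|H];
    destruct (excluded_middle_informative (phi x)) as [Hx|Hx];
    destruct (excluded_middle_informative (phi y)) as [Hy|Hy];
    rewrite phi_join in H; try tauto;
    rewrite ?join1, ?join1l, ?join0; reflexivity.
  - intros x y. destruct (excluded_middle_informative (phi (bmeet A x y))) as [H|H];
    destruct (excluded_middle_informative (phi x)) as [Hx|Hx];
    destruct (excluded_middle_informative (phi y)) as [Hy|Hy];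
    rewrite phi_meet_iff in H; try tauto;
    rewrite ?meet0, ?meet0l, ?meet1; reflexivity.
  - intros x. destruct (excluded_middle_informative (phi (bcompl A x))) as [H|H];
    destruct (excluded_middle_informative (phi x)) as [Hx|Hx];
    rewrite phi_compl in H; try tauto.
    + rewrite compl_bot; reflexivity.
    + rewrite compl_top; reflexivity.
  - destruct (excluded_middle_informative (phi (bbot A))) as [H|H]; auto.
    exfalso; apply phi_bot; auto.
  - destruct (excluded_middle_informative (phi (btop A))) as [H|H]; auto.
    exfalso; apply H, phi_top.
Qed.

Definition g (c x : car A) : car A := bjoin A (bmeet A x c) (bmeet A (t x) (bcompl A c)).

Lemma g_hom c : is_hom A A (g c).
Proof.
  apply (mix_hom A c (fun x => x) t).
  - repeat split; auto.
  - apply t_hom.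
Qed.

Lemma h_g c x : Hf c -> h (g c x) = h x.
Proof.
  unfold Hf, g. intro Hc. rewrite hj, !hm, hc, Hc, compl_top, meet0, join0, meet1. reflexivity.
Qed.

Lemma g_eq c x y : phi c -> bmeet A x c = bmeet A y c -> g c x = g c y.
Proof.
  intros Hc E. unfold g. rewrite E. f_equal. f_equal. unfold t.
  assert (Hxy : phi x <-> phi y).
  { split; intro H.
    - apply (phi_up (bmeet A y c)); [apply ble_meet_l|]. rewrite <- E. apply phi_meet; auto.
    - apply (phi_up (bmeet A x c)); [apply ble_meet_l|]. rewrite E. apply phi_meet; auto. }
  destruct (excluded_middle_informative (phi x)); destruct (excluded_middle_informative (phi y));
  tauto.
Qed.

Definition PP := prodBA (car A) (fun _ => A).
Definition RR (z w : car PP) : Prop := U (fun i => z i = w i).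

Lemma RR_refl z : RR z z.
Proof. apply Utrue. auto. Qed.
Lemma RR_sym z w : RR z w -> RR w z.
Proof. intro H. apply (Uup _ _ H). auto. Qed.
Lemma RR_trans x y z : RR x y -> RR y z -> RR x z.
Proof. intros H1 H2. apply (Uup _ _ (Umeet _ _ H1 H2)). intros i [E1 E2]. congruence. Qed.
Lemma RR_join x y x' y' : RR x x' -> RR y y' -> RR (bjoin PP x y) (bjoin PP x' y').
Proof. intros H1 H2. apply (Uup _ _ (Umeet _ _ H1 H2)). intros i [E1 E2]. simpl.
  unfold pjoin. congruence. Qed.
Lemma RR_meet x y x' y' : RR x x' -> RR y y' -> RR (bmeet PP x y) (bmeet PP x' y').
Proof. intros H1 H2. apply (Uup _ _ (Umeet _ _ H1 H2)). intros i [E1 E2]. simpl.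
  unfold pmeet. congruence. Qed.
Lemma RR_compl x x' : RR x x' -> RR (bcompl PP x) (bcompl PP x').
Proof. intros H1. apply (Uup _ _ H1). intros i E1. simpl. unfold pcompl. congruence. Qed.

Definition QQ := QBA PP RR RR_refl RR_sym RR_trans RR_join RR_meet RR_compl.
Definition q : car PP -> car QQ := qq PP RR.
Lemma q_eq z w : q z = q w <-> RR z w.
Proof. exact (qq_eq PP RR RR_refl RR_sym RR_trans z w). Qed.
Definition G' (S : car QQ) : Prop := exists z, S = q z /\ U (fun i => F (z i)).

Lemma G'_q z : G' (q z) <-> U (fun i => F (z i)).
Proof.
  split.
  - intros [w [E Hw]]. apply q_eq in E.
    apply (Uup _ _ (Umeet _ _ E Hw)). intros i [E1 E2]. rewrite E1; auto.
  - intro H. exists z. split; auto.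
Qed.

Lemma is_up : is_ultraproduct (car A) (fun _ => A) (fun _ => F) U QQ G' q.
Proof.
  split; [|split; [|split]].
  - apply qq_hom.
  - apply qq_surj.
  - intros x y. apply q_eq.
  - intro x. apply G'_q.
Qed.

Definition pre (b : car B) : car A := proj1_sig (constructive_indefinite_description _ (hs b)).
Lemma pre_spec b : h (pre b) = b.
Proof. unfold pre. destruct (constructive_indefinite_description _ (hs b)); auto. Qed.

Definition gv (x : car A) : car PP := fun c => g c x.

Lemma E_lemma x y : h x = h y -> q (gv x) = q (gv y).
Proof.
  intro Hxy. apply q_eq.
  set (d := bjoin A (bmeet A x y) (bmeet A (bcompl A x) (bcompl A y))).
  assert (Hd : Hf d).
  { unfold Hf, d. rewrite hj, !hm, !hc, Hxy, !meet_idem. apply joinCompl. }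
  assert (Ex : bmeet A x d = bmeet A x y).
  { unfold d. rewrite meetDjoin, meetA, meet_idem, meetA, meetCompl, meet0l. apply join0. }
  assert (Ey : bmeet A y d = bmeet A x y).
  { unfold d. rewrite meetDjoin, (meetC A x y), (meetA A y y x), meet_idem.
    rewrite (meetC A (bcompl A x) (bcompl A y)), (meetA A y (bcompl A y)), meetCompl, meet0l.
    apply join0. }
  apply F0U. exists d. split; auto. intros c Hc Hcd. unfold gv. apply g_eq.
  - apply Hphi; auto.
  - unfold ble in Hcd. rewrite <- Hcd. rewrite (meetC A c d), !meetA, Ex, Ey. reflexivity.
Qed.

Definition e (b : car B) : car QQ := q (gv (pre b)).

Lemma gv_join x y : gv (bjoin A x y) = bjoin PP (gv x) (gv y).
Proof. apply (@functional_extensionality (car A) (car A)); intro c. unfold gv. simpl. unfold pjoin.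
  apply (proj1 (g_hom c)). Qed.
Lemma gv_meet x y : gv (bmeet A x y) = bmeet PP (gv x) (gv y).
Proof. apply (@functional_extensionality (car A) (car A)); intro c. unfold gv. simpl. unfold pmeet.
  apply (proj1 (proj2 (g_hom c))). Qed.
Lemma gv_compl x : gv (bcompl A x) = bcompl PP (gv x).
Proof. apply (@functional_extensionality (car A) (car A)); intro c. unfold gv. simpl. unfold pcompl.
  apply (proj1 (proj2 (proj2 (g_hom c)))). Qed.
Lemma gv_bot : gv (bbot A) = bbot PP.
Proof. apply (@functional_extensionality (car A) (car A)); intro c. unfold gv. simpl. unfold pbot.
  apply (proj1 (proj2 (proj2 (proj2 (g_hom c))))). Qed.
Lemma gv_top : gv (btop A) = btop PP.
Proof. apply (@functional_extensionality (car A) (car A)); intro c. unfold gv. simpl. unfold ptop.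
  apply (proj2 (proj2 (proj2 (proj2 (g_hom c))))). Qed.

Lemma e_hom : is_hom B QQ e.
Proof.
  destruct (qq_hom PP RR RR_refl RR_sym RR_trans RR_join RR_meet RR_compl) as [qj [qm [qc [q0 q1]]]].
  unfold e. repeat split.
  - intros x y. rewrite (E_lemma (pre (bjoin B x y)) (bjoin A (pre x) (pre y))).
    + rewrite gv_join. apply qj.
    + rewrite hj, !pre_spec. reflexivity.
  - intros x y. rewrite (E_lemma (pre (bmeet B x y)) (bmeet A (pre x) (pre y))).
    + rewrite gv_meet. apply qm.
    + rewrite hm, !pre_spec. reflexivity.
  - intros x. rewrite (E_lemma (pre (bcompl B x)) (bcompl A (pre x))).
    + rewrite gv_compl. apply qc.
    + rewrite hc, !pre_spec. reflexivity.
  - rewrite (E_lemma (pre (bbot B)) (bbot A)).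
    + rewrite gv_bot. apply q0.
    + rewrite h0, !pre_spec. reflexivity.
  - rewrite (E_lemma (pre (btop B)) (btop A)).
    + rewrite gv_top. apply q1.
    + rewrite h1, !pre_spec. reflexivity.
Qed.

Lemma e_inj : inj e.
Proof.
  intros b b' E. unfold e in E. apply q_eq in E.
  destruct (Une _ (Umeet _ _ E UHf)) as [c [Ec Hc]].
  unfold gv in Ec. rewrite <- (pre_spec b), <- (pre_spec b').
  rewrite <- (h_g c (pre b) Hc), <- (h_g c (pre b') Hc), Ec. reflexivity.
Qed.

Lemma e_G b : G' (e b) <-> G b.
Proof.
  unfold e. rewrite G'_q. unfold gv. split.
  - intro H. destruct (Une _ (Umeet _ _ H UHf)) as [c [Fc Hc]].
    apply hst in Fc. rewrite h_g, pre_spec in Fc; auto.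
  - intro H. apply (Uup _ _ UHf). intros c Hc. apply hst. rewrite h_g, pre_spec; auto.
Qed.
End WithUphi.
End Main.

Lemma total_in (K : StrClass) : filter_class K ->
  forall (B : BA) (G : car B -> Prop), (forall y, G y) -> K B G.
Proof.
  intros [Kiso [Ksub [Kprod Kpre]]] B G HG.
  set (Ae := fun e : Empty_set => match e return BA with end).
  set (Fe := fun e : Empty_set => match e return car (Ae e) -> Prop with end).
  assert (K0 : K (prodBA Empty_set Ae) (prodF Empty_set Ae Fe)).
  { apply Kprod. intros []. }
  set (k := fun _ : car B => (fun e : Empty_set => match e return car (Ae e) with end) : car (prodBA Empty_set Ae)).
  apply (Kpre B (prodBA Empty_set Ae) G (prodF Empty_set Ae Fe) k); auto.
  - repeat split; intros; apply (@functional_extensionality_dep Empty_set); intros [].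
  - intro y. exists (bbot B). apply (@functional_extensionality_dep Empty_set); intros [].
  - intro x. split; [intros _ []|intros _; apply HG].
Qed.

Theorem mainTheorem19 (K : StrClass) :
  finitary_filter_class K ->
  (forall (A : BA) (F : car A -> Prop), K A F -> BA_inf A F) ->
  logical_class K.
Proof.
  intros [HK Kup] Kinf. split; [exact HK|].
  destruct HK as [Kiso [Ksub [Kprod Kpre]]] eqn:EHK.
  intros A B F G h hh hs hst KAF.
  destruct (classic (btop B = bbot B)) as [Htr|Hntr].
  - apply (total_in K HK). intro y.
    destruct (Kinf A F KAF) as [[a Fa] _]. apply hst in Fa.
    assert (Hall : forall z : car B, z = bbot B).
    { intro z. rewrite <- (meet1 B z), Htr. apply meet0. }
    rewrite (Hall y), <- (Hall (h a)). exact Fa.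
  - destruct (exU A B h hh) as [U [Uult F0U]].
    destruct (exphi A B h hh Hntr) as [phi [Hphi [phiF phiP]]].
    pose proof (Kup (car A) (fun _ => A) (fun _ => F) U _ _ _ Uult (fun _ => KAF)
                  (is_up A F U Uult)) as KQ.
    pose proof (Ksub _ _ _ _ (e_hom A B h hh hs U Uult F0U phi Hphi phiF phiP)
                  (e_inj A B h hh hs U Uult F0U phi) KQ) as KB.
    replace G with (fun b => G' A F U Uult (e A B h hs U Uult phi b)); auto.
    apply functional_extensionality; intro b. apply propositional_extensionality.
    apply (e_G A B F G h hh hs hst U Uult F0U phi).
Qed.
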